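(* Let ${\bf u}\in\mathcal A^{\mathbb N}$ have its language closed under reversal. If $D({\bf u})>0$, then either there exists a non-palindromic factor $q$ of ${\bf u}$ such that $\Gamma(q)$ contains a cycle, or there exists a palindromic factor $q$ of ${\bf u}$ such that $\Theta(q)$ contains a cycle. Moreover, if the empty word is the unique factor $q$ with this property, then there exists a letter having a non-palindromic complete return word in ${\bf u}$.
   Context: $\widetilde w$ is the reversal of $w$; $w$ is a palindrome if $w=\widetilde w$; the language is closed under reversal if the reversal of every factor is a factor. Palindromic defect: for a finite word $w$ of length $n$, $D(w)=n+1-$(number of distinct palindromic factors of $w$, including the empty word), and $D({\bf u})=\sup D(w)$ over factors of ${\bf u}$. With $E^+(w)=\{b: wb\text{ factor}\}$, $E^-(w)=\{a: aw\text{ factor}\}$, $E(w)=\{(a,b): awb\text{ factor}\}$: $\Gamma(w)$ is the bipartite graph on $(E^-(w)\times\{-1\})\cup(E^+(w)\times\{+1\})$ with edges $\{(a,-1),(b,+1)\}$ for $(a,b)\in E(w)$; for palindromic $w$, $\Theta(w)$ is the graph on $E^+(w)$ with edges $\{a,b\}$ for $(a,b)\in E(w)$, $a\ne b$. If $i<j$ are consecutive occurrences of a factor $w$ in ${\bf u}=u_0u_1\cdots$, the word $u_i\cdots u_{j+|w|-1}$ is a complete return word to $w$. *)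

(* Defs.v *)
From mathcomp Require Import all_boot.
Set Implicit Arguments. Unset Strict Implicit. Unset Printing Implicit Defensive.

Section Words.
Variable A : finType.

Definition subword (u : nat -> A) (i n : nat) : seq A := mkseq (fun k => u (i + k)) n.

Definition occurs_at (u : nat -> A) (w : seq A) (i : nat) : Prop := subword u i (size w) = w.

Definition factor (u : nat -> A) (w : seq A) : Prop := exists i, occurs_at u w i.

Definition palindrome (w : seq A) : bool := rev w == w.

Definition closed_under_reversal (u : nat -> A) : Prop :=
  forall w, factor u w -> factor u (rev w).

Definition factors_fin (w : seq A) : seq (seq A) :=
  [seq take l (drop i w) | i <- iota 0 (size w).+1, l <- iota 0 (size w - i).+1].

(* number of distinct palindromic factors of w, empty word included *)
Definition num_pal (w : seq A) : nat := size (undup (filter palindrome (factors_fin w))).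

Definition defect (w : seq A) : nat := (size w).+1 - num_pal w.

(* D(u) = sup_{w factor} D(w) > 0 *)
Definition defect_pos (u : nat -> A) : Prop := exists w, factor u w /\ 0 < defect w.

Definition ext_right (u : nat -> A) (w : seq A) (b : A) : Prop := factor u (rcons w b).
Definition ext_left (u : nat -> A) (w : seq A) (a : A) : Prop := factor u (a :: w).
Definition ext_both (u : nat -> A) (w : seq A) (a b : A) : Prop := factor u (a :: rcons w b).

(* Gamma(w): vertices (a,false) ~ (a,-1) for a in E^-(w), (b,true) ~ (b,+1) for b in E^+(w);
   edge {(a,-1),(b,+1)} iff (a,b) in E(w). Symmetric edge relation. *)
Definition Gamma_edge (u : nat -> A) (w : seq A) (x y : A * bool) : Prop :=
  (x.2 = false /\ y.2 = true /\ ext_left u w x.1 /\ ext_right u w y.1 /\ ext_both u w x.1 y.1)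
  \/ (y.2 = false /\ x.2 = true /\ ext_left u w y.1 /\ ext_right u w x.1 /\ ext_both u w y.1 x.1).

Definition Theta_edge (u : nat -> A) (w : seq A) (a b : A) : Prop :=
  a != b /\ ext_right u w a /\ ext_right u w b /\ (ext_both u w a b \/ ext_both u w b a).

End Words.

(* A (simple, undirected) graph given by a symmetric edge relation E contains a cycle:
   distinct vertices x = v_0, v_1, ..., v_k (k >= 2) with v_i v_{i+1} and v_k v_0 edges. *)
Definition has_cycle (T : eqType) (E : T -> T -> Prop) : Prop :=
  exists (x : T) (s : seq T), 2 <= size s /\ uniq (x :: s) /\
    forall i, i < (size s).+1 ->
      E (nth x (x :: s) i) (nth x (x :: s) (i.+1 %% (size s).+1)).

Section Words2.
Variable A : finType.

Definition cycle_prop (u : nat -> A) (q : seq A) : Prop :=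
  (~~ palindrome q /\ has_cycle (Gamma_edge u q)) \/
  (palindrome q /\ has_cycle (Theta_edge u q)).

Definition complete_return_word (u : nat -> A) (w r : seq A) : Prop :=
  exists i j, [/\ i < j, occurs_at u w i, occurs_at u w j,
    (forall k, i < k < j -> ~ occurs_at u w k) &
    r = subword u i (j + size w - i)].
End Words2.

(* Main.v *)
Require Import Defs.
From mathcomp Require Import all_boot.
From Stdlib Require Import ClassicalEpsilon.
From mathcomp Require Import zify.
Set Implicit Arguments. Unset Strict Implicit. Unset Printing Implicit Defensive.

Section W.
Variable A : finType.
Variable u : nat -> A.
Notation W := (subword u).

Lemma size_W i n : size (W i n) = n.
Proof. by rewrite /subword size_mkseq. Qed.

Lemma nth_W x0 i n k : k < n -> nth x0 (W i n) k = u (i + k).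
Proof. by move=> kn; rewrite /subword nth_mkseq. Qed.

Lemma W0 i : W i 0 = [::].
Proof. by []. Qed.

Lemma Wcons i n : W i n.+1 = u i :: W i.+1 n.
Proof.
apply: (@eq_from_nth _ (u 0)); first by rewrite size_W /= size_W.
move=> k; rewrite size_W => kn; case: k kn => [|k] kn.
  by rewrite nth_W // addn0.
rewrite nth_W // -[nth _ (_ :: _) _]/(nth (u 0) (W i.+1 n) k) nth_W //.
by rewrite addSnnS.
Qed.

Lemma Wrcons i n : W i n.+1 = rcons (W i n) (u (i + n)).
Proof.
apply: (@eq_from_nth _ (u 0)); first by rewrite size_rcons !size_W.
move=> k; rewrite size_W => kn; rewrite nth_rcons size_W nth_W //.
case: (ltnP k n) => [kn'|nk]; first by rewrite nth_W.
have ->: k = n by apply/eqP; rewrite eqn_leq nk -ltnS kn.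
by rewrite eqxx.
Qed.

Lemma takeW i n m : m <= n -> take m (W i n) = W i m.
Proof.
move=> mn; have sz : size (take m (W i n)) = m by rewrite size_takel // size_W.
apply: (@eq_from_nth _ (u 0)); first by rewrite sz size_W.
move=> k; rewrite sz => km.
by rewrite nth_take // !nth_W //; apply: leq_trans mn.
Qed.

Lemma dropW i n m : drop m (W i n) = W (i + m) (n - m).
Proof.
apply: (@eq_from_nth _ (u 0)); first by rewrite size_drop !size_W.
move=> k; rewrite size_drop size_W => kn; rewrite nth_drop !nth_W ?addnA //.
by rewrite -ltn_subRL.
Qed.

Lemma nth_revW x0 i n k : k < n -> nth x0 (rev (W i n)) k = u (i + (n - k.+1)).
Proof. by move=> kn; rewrite nth_rev size_W // nth_W // subnSK // leq_subr. Qed.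

Lemma factorW i n : factor u (W i n).
Proof. by exists i; rewrite /occurs_at size_W. Qed.

End W.
Lemma last_before (P : nat -> bool) a g : a < g -> P a ->
  exists m, [/\ a <= m, m < g, P m & forall k, m < k < g -> ~~ P k].
Proof.
elim: g => // g IH; rewrite ltnS leq_eqVlt => /orP[/eqP ag Pa|ag Pa].
  subst g; exists a; split => //.

  move=> k /andP[ak kg]; lia.
case Pg: (P g).
  exists g; split => //; first exact: ltnW.
  move=> k /andP[gk kg]; lia.
have [m [am mg Pm H]] := IH ag Pa.
exists m; split => //; first by lia.
move=> k /andP[mk kg]; rewrite ltnS leq_eqVlt in kg; case/orP: kg => [/eqP ->|kg].
  by rewrite Pg.
by apply: H; rewrite mk kg.
Qed.

Section Graph.
Variable T : eqType.
Variable E : T -> T -> Prop.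

Definition Eb a b : bool := if excluded_middle_informative (E a b) then true else false.
Lemma EbP a b : Eb a b -> E a b.
Proof. by rewrite /Eb; case: excluded_middle_informative. Qed.
Lemma PEb a b : E a b -> Eb a b.
Proof. by rewrite /Eb; case: excluded_middle_informative. Qed.

Definition R a b := (a == b) || Eb a b.

Definition reach X0 Y Z := exists p, [/\ path R Y p, last Y p = Z & X0 \notin Y :: p].

Lemma reach0 X0 Y : Y != X0 -> reach X0 Y Y.
Proof. by move=> YX; exists [::]; rewrite /= inE eq_sym (negbTE YX). Qed.

Lemma reach_step X0 Y Z Z' : reach X0 Y Z -> (Z = Z' \/ E Z Z') -> Z' != X0 -> reach X0 Y Z'.
Proof.
move=> [p [pth lst nX]] HZ ZX; exists (rcons p Z'); split.
- rewrite rcons_path pth lst /R; case: HZ => [->|/PEb ->]; first by rewrite eqxx.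
  by rewrite orbT.
- by rewrite last_rcons.
- by rewrite -cats1 -cat_cons mem_cat negb_or nX inE eq_sym ZX.
Qed.

Lemma pathR_Eb Y p : path R Y p -> uniq (Y :: p) -> path Eb Y p.
Proof.
elim: p Y => //= a p IH Y /andP[Ra pth] /andP[nY uq].
rewrite IH //; move: Ra nY; rewrite /R inE negb_or => /orP[/eqP->|->] //.
by rewrite eqxx.
Qed.

Lemma forest X0 Y0 Z0 :
  ~ has_cycle E -> E X0 Y0 -> E Z0 X0 -> reach X0 Y0 Z0 -> Y0 = Z0.
Proof.
move=> nc EXY EZX [p [pth lst nX]].
apply/eqP; apply/negPn/negP => YZ; apply: nc.
move: lst; case: (shortenP pth) => p' pth' uq sub lst.
have pE := pathR_Eb pth' uq.
have nX' : X0 \notin Y0 :: p'.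
  move: nX; rewrite !inE !negb_or => /andP[-> nXp] /=; apply/negP => /sub.
  by rewrite (negbTE nXp).
have p'0 : p' != [::] by move: lst YZ; case: p' {pth' uq pE nX' sub} => //= ->; rewrite eqxx.
exists X0, (Y0 :: p'); split; [|split].
- by case: p' p'0 {pth' uq pE nX' sub lst}.
- by rewrite cons_uniq nX' uq.
move=> i; rewrite /= ltnS => ilt.
case: i ilt => [|i] ilt.
  rewrite modn_small //=; case: p' p'0 {pth' uq pE nX' sub lst ilt} => //.
rewrite leq_eqVlt in ilt; case/orP: ilt => [/eqP [ei]|ilt].
  subst i; rewrite modnn /=.
  have := @nth_last _ X0 (Y0 :: p'); rewrite /= => ->; rewrite lst //.
rewrite modn_small; last by rewrite /= ltnS ltnS; exact: ilt.
rewrite -[nth _ (X0 :: _) i.+1]/(nth X0 (Y0 :: p') i).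
rewrite -[nth _ (X0 :: _) i.+2]/(nth X0 p' i).
by apply: EbP; move/(pathP X0): pE; apply.
Qed.

Lemma walk_lemma (arr dep : nat -> T) (vis : nat -> bool) K X0 :
  ~ has_cycle E -> 1 < K -> vis 1 -> vis K ->
  (forall k, 1 <= k <= K -> vis k -> arr k = dep k \/ E (arr k) (dep k)) ->
  (forall k k', 1 <= k -> k < k' -> k' <= K -> vis k -> vis k' ->
       (forall j, k < j < k' -> ~~ vis j) -> dep k = arr k') ->
  arr 1 = X0 -> dep K = X0 ->
  (forall k, 1 <= k < K -> vis k -> dep k != X0) ->
  arr K = dep 1.
Proof.
move=> nc K1 v1 vK st ch a1 dK nX.
have claim : forall k, 1 <= k < K -> vis k -> reach X0 (dep 1) (dep k).
  elim/ltn_ind => k IH /andP[k1 kK] vk.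
  rewrite leq_eqVlt in k1; case/orP: k1 => [/eqP <-|k1].
    by apply: reach0; apply: nX => //; rewrite K1.
  have [m [m1 mk vm H]] := last_before k1 v1.
  have Hm := IH m mk; rewrite m1 (ltn_trans mk kK) in Hm.
  have := Hm isT vm; rewrite (ch m k) //; last by apply: ltnW.
  move=> Ha; apply: (reach_step Ha); first by apply: st => //; lia.
  by apply: nX => //; lia.
have [m [m1 mK vm H]] := last_before K1 v1.
have Rm := claim m; rewrite m1 mK in Rm; have := Rm isT vm.
have chm : dep m = arr K by apply: ch => //; lia.
rewrite chm => Ra; symmetry; apply: (forest nc _ _ Ra).
- have := st 1; rewrite leqnn ltnW // => /(_ isT v1); rewrite a1 => -[E1|] //.
  by move: (nX 1); rewrite leqnn K1 E1 eqxx => /(_ isT v1).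
- have := st K; rewrite leqnn ltnW // => /(_ isT vK); rewrite dK => -[E1|] //.
  move: (nX m); rewrite m1 mK => /(_ isT vm); rewrite chm.
  by rewrite E1 eqxx.
Qed.

End Graph.

Section WordLemmas.
Variable T : eqType.

Lemma consrcons_eq (c d : T) w : c :: w = rcons w d -> c = d.
Proof.
elim: w c => [|e w IH] c /=; first by case.
by case=> -> /IH.
Qed.

Lemma consrcons_pal (c d : T) w : c :: w = rcons w d -> rev w = w.
Proof.
suff: c :: w = rcons w d -> all (pred1 c) w.
  move=> H /H /all_pred1P ->; by rewrite rev_nseq.
elim: w c => [|e w IH] c //= [ce H].
subst e; have := IH c H; by rewrite eqxx.
Qed.

Lemma consrev_eq (c d : T) w : c :: rev w = rcons w d -> c = d.
Proof.
case: w => [|e w] /=; first by case.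
rewrite rev_cons => H.
have := congr1 (last c) H; rewrite /= !last_rcons => ed.
by case: H => ->.
Qed.

Lemma mem2_sym (q a b : seq T) : a \in [:: q; rev q] ->
  (b \in [:: a; rev a]) = (b \in [:: q; rev q]).
Proof.
rewrite !inE => /orP[/eqP->|/eqP->] //; by rewrite revK orbC.
Qed.

End WordLemmas.

Section Main.
Variable A : finType.
Variable u : nat -> A.
Hypothesis Hcl : closed_under_reversal u.
Notation W := (subword u).

Definition Inv n := forall i L, n.+2 <= L ->
  W (i + (L - n)) n \in [:: W i n; rev (W i n)] ->
  (forall k, 0 < k < L - n -> W (i + k) n \notin [:: W i n; rev (W i n)]) ->
  W (i + (L - n - 1)) n.+1 = rev (W i n.+1).

Definition Acyc n := forall q, size q = n -> factor u q -> ~ cycle_prop u q.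

Lemma factor_revW j m : factor u (rev (W j m)).
Proof. by apply: Hcl; apply: factorW. Qed.

Lemma palW j m : (forall t, t < m -> u (j + t) = u (j + (m.-1 - t))) -> rev (W j m) = W j m.
Proof.
move=> H; apply: (@eq_from_nth _ (u 0)); first by rewrite size_rev.
move=> t; rewrite size_rev size_W => tm; rewrite nth_revW // nth_W // [RHS]H //.
congr (u (_ + _)); lia.
Qed.

Lemma pal_shift j n : W j n \in [:: W j.+1 n; rev (W j.+1 n)] -> rev (W j n.+1) = W j n.+1.
Proof.
rewrite !inE => /orP[/eqP e|/eqP e].
  have H : forall t, t < n -> u (j + t) = u (j + t.+1).
    move=> t tn; have := congr1 (nth (u 0) ^~ t) e; rewrite !nth_W // => ->.
    by rewrite addnS addSn.
  have H2 : forall t, t <= n -> u (j + t) = u j.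
    elim=> [|t IH] tn; first by rewrite addn0.
    by rewrite -H ?IH // ltnW.
  apply: palW => t tn; rewrite !H2 //; lia.
have H : forall t, t < n -> u (j + t) = u (j + (n - t)).
  move=> t tn; have := congr1 (nth (u 0) ^~ t) e; rewrite nth_W // nth_revW // => ->.
  congr (u _); lia.
apply: palW => t tn /=; case: (ltnP t n) => [tn'|nt].
  by rewrite H.
have -> : t = n by lia.
rewrite subnn addn0; case: n {e tn nt} H => [|n] H; first by rewrite addn0.
by have := H 0 (ltn0Sn n); rewrite addn0 subn0 => ->.
Qed.

Lemma chain n (HI : Inv n) i q k k' : k < k' ->
  W (i + k) n \in [:: q; rev q] -> W (i + k') n \in [:: q; rev q] ->
  (forall j, k < j < k' -> W (i + j) n \notin [:: q; rev q]) ->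
  W (i + k'.-1) n.+1 \in [:: W (i + k) n.+1; rev (W (i + k) n.+1)].
Proof.
move=> kk' vk vk' H.
have [e|ne] := eqVneq k' k.+1; first by subst; rewrite mem_head.
have H1 := HI (i + k) (k' - k + n).
rewrite (_ : i + k + (k' - k + n - n) = i + k') in H1; last by lia.
rewrite (_ : i + k + (k' - k + n - n - 1) = i + k'.-1) in H1; last by lia.
rewrite H1; first by rewrite !inE eqxx orbT.
- lia.
- by rewrite (mem2_sym _ vk).
move=> j /andP[j0 jl]; rewrite (mem2_sym _ vk) -addnA; apply: H; lia.
Qed.

Lemma step n : Inv n -> Acyc n -> Inv n.+1.
Proof.
move=> HI HA i L HL Hend Hmid.
set K := L - n.+1 in Hend Hmid *.
have K2 : 1 < K by rewrite /K; lia.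
set s := W i n.+1 in Hend Hmid *.
set q := W i.+1 n.
have sE : s = u i :: q by rewrite /s Wcons.
pose N k := W (i + k) n.
pose al k := u (i + k.-1).
pose be k := u (i + k + n).
have FM : forall k, W (i + k) n.+1 = rcons (N k) (be k) by move=> k; rewrite Wrcons.
have FMp : forall k, 0 < k -> W (i + k.-1) n.+1 = al k :: N k.
  by move=> k k0; rewrite Wcons /N /al; congr (_ :: W _ _); lia.
have FB : forall k, 0 < k -> W (i + k.-1) n.+2 = al k :: rcons (N k) (be k).
  move=> k k0; rewrite Wcons Wrcons /N /al /be; congr (_ :: rcons (W _ _) (u _)); lia.
have N1 : N 1 = q by rewrite /N addn1.
pose vis k := N k \in [:: q; rev q].
have v1 : vis 1 by rewrite /vis N1 mem_head.
have Hch : forall k k', k < k' -> vis k -> vis k' -> (forall j, k < j < k' -> ~~ vis j) ->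
    W (i + k'.-1) n.+1 \in [:: W (i + k) n.+1; rev (W (i + k) n.+1)].
  by move=> k k' kk' vk vk' H; apply: (chain HI kk' vk vk' H).
have HendR : W (i + K) n.+1 = rev s.
  move: Hend; rewrite !inE => /orP[/eqP Hs|/eqP//].
  have [ps|nps] := eqVneq (rev s) s; first by rewrite Hs ps.
  exfalso.
  have eK1 : N K.+1 = q.
    have -> : N K.+1 = drop 1 (W (i + K) n.+1).
      by rewrite dropW /N; congr (W _ _); lia.
    by rewrite Hs sE /= drop0.
  have vK1 : vis K.+1 by rewrite /vis eK1 mem_head.
  have K1 : 1 < K.+1 by lia.
  have [m [m1 mK vm Hm]] := last_before K1 v1.
  have := Hch m K.+1 mK vm vK1 Hm; rewrite /= Hs => Hsm.
  have Mm : W (i + m) n.+1 \in [:: s; rev s].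
    move: Hsm; rewrite !inE => /orP[/eqP->|/eqP->]; first by rewrite eqxx.
    by rewrite revK eqxx orbT.
  case: (ltnP m K) => mK'.
    by have := Hmid m; rewrite mK' (leq_trans _ m1) // Mm => /(_ isT).
  have mKe : m = K by lia.
  subst m.
  apply: (negP nps); apply/eqP; rewrite -Hs; apply: pal_shift.
  have <- : N K.+1 = W (i + K).+1 n by rewrite /N addnS.
  by rewrite eK1.
have [NK beK] : N K = rev q /\ be K = u i.
  by have := FM K; rewrite HendR sE rev_cons => /rcons_inj [-> ->].
have vK : vis K by rewrite /vis NK !inE eqxx orbT.
have mid : forall k, 0 < k < K -> W (i + k) n.+1 <> rev s.
  by move=> k kK e; have := Hmid k kK; rewrite e !inE eqxx orbT.
rewrite -/K subn1 FB; last by lia.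
rewrite (_ : W i n.+2 = W (i + 1.-1) n.+2); last by rewrite addn0.
rewrite FB // N1 NK beK (_ : al 1 = u i); last by rewrite /al addn0.
suff -> : al K = be 1 by rewrite rev_cons rev_rcons rcons_cons.
have qW : q = W (i + 1) n by rewrite addn1.
have nc_pal : rev q = q -> ~ has_cycle (Theta_edge u q).
  move=> qp hc; apply: (HA q); first by rewrite size_W.
  - by rewrite qW; apply: factorW.
  by right; split => //; rewrite /palindrome qp.
have nc_npal : rev q != q -> ~ has_cycle (Gamma_edge u q).
  move=> qp hc; apply: (HA q); first by rewrite size_W.
  - by rewrite qW; apply: factorW.
  by left; split.
have visE : forall k, vis k -> N k = q \/ N k = rev q.
  by move=> k; rewrite /vis !inE => /orP[/eqP->|/eqP->]; [left|right].
have [qp|nqp] := eqVneq (rev q) q.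
-
  have visq : forall k, vis k -> N k = q by move=> k /visE [|->].
  apply: (@walk_lemma _ (Theta_edge u q) al be vis K (u i) (nc_pal qp) K2 v1 vK).
  + move=> k /andP[k0 kK] vk; have Nk := visq k vk.
    have [e|ne] := eqVneq (al k) (be k); [by left | right].
    split => //; split; last split.
    * rewrite /ext_right; have := factor_revW (i + k.-1) n.+1.
      by rewrite FMp // Nk rev_cons qp.
    * by rewrite /ext_right; have := factorW u (i + k) n.+1; rewrite FM Nk.
    * by left; rewrite /ext_both; have := factorW u (i + k.-1) n.+2; rewrite FB // Nk.
  + move=> k k' k0 kk' k'K vk vk' H.
    have := Hch k k' kk' vk vk' H.
    rewrite FMp; last by lia.
    rewrite FM (visq k vk) (visq k' vk') !inE => /orP[/eqP e|/eqP e].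
      by rewrite (consrcons_eq e).
    by move: e; rewrite rev_rcons qp => -[->].
  + by rewrite /al addn0.
  + by [].
  + move=> k kK vk; apply/eqP => e; apply: (mid k); first by lia.
    by rewrite FM (visq k vk) e sE rev_cons qp.
-
  pose arr k := (al k, N k != q).
  pose dep k := (be k, N k == q).
  apply: (f_equal fst (@walk_lemma _ (Gamma_edge u q) arr dep vis K (u i, false) (nc_npal nqp) K2 v1 vK _ _ _ _ _)).
  + move=> k /andP[k0 kK] vk; right; rewrite /arr /dep.
    case: (visE k vk) => Nk; rewrite Nk.
    * rewrite eqxx /=; left; split => //; split => //; split; last split.
      - by rewrite /ext_left; have := factorW u (i + k.-1) n.+1; rewrite FMp // Nk.
      - by rewrite /ext_right; have := factorW u (i + k) n.+1; rewrite FM Nk.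
      - by rewrite /ext_both; have := factorW u (i + k.-1) n.+2; rewrite FB // Nk.
    * rewrite (negbTE nqp) /=; right; split => //; split => //; split; last split.
      - rewrite /ext_left; have := factor_revW (i + k) n.+1.
        by rewrite FM Nk rev_rcons revK.
      - rewrite /ext_right; have := factor_revW (i + k.-1) n.+1.
        by rewrite FMp // Nk rev_cons revK.
      - rewrite /ext_both; have := factor_revW (i + k.-1) n.+2.
        by rewrite FB // Nk rev_cons rev_rcons revK rcons_cons.
  + move=> k k' k0 kk' k'K vk vk' H.
    have := Hch k k' kk' vk vk' H.
    rewrite FMp; last by lia.
    rewrite FM /arr /dep => Hm.
    have key : al k' = be k /\ N k' = rev (N k).
      move: Hm; rewrite !inE => /orP[/eqP e|/eqP e]; last first.
        by move: e; rewrite rev_rcons => -[-> ->].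
      case: (visE k vk) (visE k' vk') => Nk [] Nk'; rewrite Nk Nk' in e *.
      - by move: nqp; rewrite (consrcons_pal e) eqxx.
      - by rewrite (consrev_eq e).
      - have e' : al k' :: rev (rev q) = rcons (rev q) (be k) by rewrite revK.
        by rewrite (consrev_eq e') revK.
      - by move: nqp; have := consrcons_pal e => /(congr1 rev); rewrite !revK => ->; rewrite eqxx.
    case: key => -> ->; congr (_, _).
    case: (visE k vk) => ->; first by rewrite eqxx nqp.
    by rewrite revK eqxx (negbTE nqp).
  + by rewrite /arr /al addn0 N1 eqxx.
  + by rewrite /dep NK beK; congr (_, _); apply/negbTE.
  + move=> k kK vk; apply/eqP => -[e1 e2]; apply: (mid k); first by lia.
    have Nk : N k = rev q by case: (visE k vk) e2 => -> //; rewrite eqxx.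
    by rewrite FM Nk e1 sE rev_cons.
Qed.

Lemma Inv0 : Inv 0.
Proof.
move=> i L HL _ Hmid; exfalso; have := Hmid 1; rewrite !W0 mem_head => H; have : 0 < 1 < L - 0 by lia. by move/H.
Qed.

Lemma palWP i L : rev (W i L) = W i L -> forall t, t < L -> u (i + t) = u (i + (L - t.+1)).
Proof.
by move=> e t tL; have := congr1 (nth (u 0) ^~ t) e; rewrite nth_revW // nth_W // => ->.
Qed.

Lemma W1 i : W i 1 = [:: u i].
Proof. by rewrite Wcons W0. Qed.

Lemma Inv1 : (forall a r, complete_return_word u [:: a] r -> palindrome r) -> Inv 1.
Proof.
move=> Hc i L HL Hend Hmid.
have crw : complete_return_word u [:: u i] (W i L).
  exists i, (i + (L - 1)); split.
  - lia.
  - by rewrite /occurs_at W1.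
  - by move: Hend; rewrite /occurs_at /= !W1 /= !inE orbb => /eqP.
  - move=> k /andP[ik kj]; rewrite /occurs_at /= => e.
    have := Hmid (k - i); rewrite (_ : i + (k - i) = k); last by lia.
    rewrite e W1 mem_head => H; have : 0 < k - i < L - 1 by lia.
    by move/H.
  - by congr (W _ _) => /=; lia.
have := Hc _ _ crw; rewrite /palindrome => /eqP /palWP P.
apply: (@eq_from_nth _ (u 0)); first by rewrite size_rev !size_W.
move=> t; rewrite size_W => t2; rewrite nth_W // nth_revW //.
case: t t2 => [|[|t]] t2 //.
  by rewrite P; [congr (u _)|]; lia.
rewrite [RHS](P 0); last by lia.
by congr (u _); lia.
Qed.

Lemma HP_of_Inv : (forall n, 0 < n -> Inv n) ->
  forall m g n, 0 < n -> m < g -> W m n = W g n -> palindrome (W m n) ->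
  (forall k, m < k < g -> W k n != W m n) -> palindrome (W m (g + n - m)).
Proof.
move=> HI m g n n0 mg eq pal nb.
set R := g + n - m.
have claim : forall d, n + d <= R - 1 -> W (m + (R - (n + d))) (n + d) = rev (W m (n + d)).
  elim=> [|d IH] hd.
    rewrite addn0 (_ : m + (R - n) = g); last by rewrite /R; lia.
    by rewrite -eq; move/eqP: pal.
  have := HI (n + d) (ltn_addr d n0) m R; rewrite (_ : m + (R - (n + d) - 1) = m + (R - (n + d.+1))); last by lia.
  rewrite addnS; apply; first by lia.
  - by rewrite IH ?inE ?eqxx ?orbT //; lia.
  move=> k /andP[k0 kR]; rewrite !inE negb_or; apply/andP; split; apply/negP => /eqP e.
    have := nb (m + k); rewrite (_ : m < m + k < g); last by lia.
    move=> /(_ isT); rewrite -(takeW u (m + k) (leq_addr d n)) e takeW ?leq_addr //.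
    by rewrite eqxx.
  have e2 : W (m + k + d) n = W g n.
    have -> : W (m + k + d) n = drop d (W (m + k) (n + d)).
      by rewrite dropW; congr (W _ _); lia.
    rewrite e -IH; last by lia.
    rewrite dropW; congr (W _ _); rewrite /R; lia.
  have := nb (m + k + d); rewrite (_ : m < m + k + d < g); last by lia.
  by rewrite e2 eq eqxx => /(_ isT).
have R2 : 2 <= R by rewrite /R; lia.
have := claim (R - 1 - n); rewrite (_ : n + (R - 1 - n) = R - 1); last by lia.
rewrite (_ : m + (R - (R - 1)) = m + 1); last by lia.
move=> /(_ (leqnn _)) C.
apply/eqP; apply: palW => t tR.
have CC : forall t, t < R - 1 -> u (m + 1 + t) = u (m + (R - 1 - t.+1)).
  move=> t' tR'; have := congr1 (nth (u 0) ^~ t') C; rewrite nth_W // nth_revW //.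
case: t tR => [|t] tR.
  by rewrite addn0 (_ : m + (R.-1 - 0) = m + 1 + (R - 2)) ?CC; [congr (u _)| |]; lia.
rewrite (_ : m + t.+1 = m + 1 + t) ?CC; [congr (u _)| |]; lia.
Qed.

Definition lpsk (v : seq A) := find (fun k => palindrome (drop k v)) (iota 0 (size v).+1).

Lemma lpsk_spec v : [/\ lpsk v <= size v, palindrome (drop (lpsk v) v) &
   forall k, k <= size v -> palindrome (drop k v) -> lpsk v <= k].
Proof.
have hs : has (fun k => palindrome (drop k v)) (iota 0 (size v).+1).
  apply/hasP; exists (size v); first by rewrite mem_iota; lia.
  by rewrite drop_size.
split.
- by move: hs; rewrite has_find size_iota /lpsk.
- have := nth_find 0 hs; rewrite nth_iota //; last by move: hs; rewrite has_find size_iota.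
- move=> k kv pk; rewrite leqNgt; apply/negP => lk.
  have := before_find 0 lk; rewrite nth_iota ?add0n ?pk //.
Qed.

Hypothesis HP : forall m g n, 0 < n -> m < g -> W m n = W g n -> palindrome (W m n) ->
  (forall k, m < k < g -> W k n != W m n) -> palindrome (W m (g + n - m)).

Lemma defect0 w : factor u w -> defect w = 0.
Proof.
case=> i0; rewrite /occurs_at; set N := size w => <-.
set v := W i0 N.
pose f j := drop (lpsk (W i0 j)) (W i0 j).
have fE : forall j, f j = W (i0 + lpsk (W i0 j)) (j - lpsk (W i0 j)) by move=> j; rewrite /f dropW.
have fpal : forall j, palindrome (f j) by move=> j; case: (lpsk_spec (W i0 j)).
have kle : forall j, lpsk (W i0 j) <= j by move=> j; case: (lpsk_spec (W i0 j)); rewrite size_W.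
have kpos : forall j, 0 < j -> lpsk (W i0 j) < j.
  move=> j j0; case: (lpsk_spec (W i0 j)) => _ _ /(_ j.-1); rewrite size_W.
  move=> H; have : lpsk (W i0 j) <= j.-1.
    apply: H; first by rewrite leq_pred.
    rewrite dropW (_ : j - j.-1 = 1); last by lia.
    by rewrite W1 /palindrome /= eqxx.
  lia.
have inj : forall a b, a < b -> f a != f b.
  move=> a b ab; apply/eqP => e.
  set ka := lpsk (W i0 a) in e; set kb := lpsk (W i0 b) in e.
  have kbb := kpos b (leq_ltn_trans (leq0n a) ab); rewrite -/kb in kbb.
  have kaa := kle a; rewrite -/ka in kaa.
  have := congr1 size e; rewrite !fE -/ka -/kb !size_W => sz.
  set n := b - kb in sz.
  have e' : W (i0 + ka) n = W (i0 + kb) n by have := e; rewrite !fE -/ka -/kb sz.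
  have lt : i0 + ka < i0 + kb by lia.
  have [m [m1 mg Pm Hm]] := last_before (P := fun x => W x n == W (i0 + kb) n) lt (introT eqP e').
  have := HP (m := m) (g := i0 + kb) (n := n) _ mg (eqP Pm) _ _.
  have pb : palindrome (W m n) by rewrite (eqP Pm) -(fE b) fpal.
  rewrite (_ : 0 < n); last by lia.
  move=> /(_ isT pb) H.
  have : palindrome (W m (i0 + kb + n - m)).
    apply: H => k km; rewrite (eqP Pm); exact: Hm.
  rewrite (_ : W m (i0 + kb + n - m) = drop (m - i0) (W i0 b)); last first.
    by rewrite dropW; congr (W _ _); lia.
  move=> pd; case: (lpsk_spec (W i0 b)) => _ _ /(_ (m - i0)); rewrite size_W -/kb.
  move=> /(_ _ pd); lia.
have sub : {subset map f (iota 0 N.+1) <= undup (filter (@palindrome A) (factors_fin v))}.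
  move=> x /mapP[j]; rewrite mem_iota add0n ltnS => jN ->.
  rewrite mem_undup mem_filter fpal /=.
  apply/allpairsPdep; exists (lpsk (W i0 j)), (j - lpsk (W i0 j)); split.
  - by rewrite mem_iota size_W; have := kle j; lia.
  - by rewrite mem_iota size_W; have := kle j; lia.
  by rewrite fE /v dropW takeW //; lia.
have uq : uniq (map f (iota 0 N.+1)).
  rewrite map_inj_in_uniq ?iota_uniq // => a b _ _ e.
  case: (ltngtP a b) => // ab.
  - by move: (inj a b ab); rewrite e eqxx.
  - by move: (inj b a ab); rewrite e eqxx.
have := uniq_leq_size uq sub; rewrite size_map size_iota => H.
by rewrite /defect /num_pal size_W; apply/eqP; rewrite subn_eq0.
Qed.
End Main.

From Stdlib Require Import Classical_Prop.
Unset Implicit Arguments.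

Theorem theorem26 (A : finType) (u : nat -> A) :
  closed_under_reversal u -> defect_pos u ->
  (exists q, factor u q /\ cycle_prop u q) /\
  ((cycle_prop u [::] /\ (forall q, factor u q -> cycle_prop u q -> q = [::])) ->
   exists (a : A) (r : seq A), complete_return_word u [:: a] r /\ ~~ palindrome r).
Proof.
move=> Hcl [w [fw dw]].
have fin : (forall n, 0 < n -> Inv u n) -> False.
  move=> HI; have := @defect0 A u (HP_of_Inv HI) w fw.
  by move=> e; rewrite e in dw.
split.
- apply: NNPP => H; apply: fin.
  have HA : forall n, Acyc u n.
    by move=> n q _ fq cp; apply: H; exists q.
  have Hall : forall n, Inv u n.
    elim=> [|n IH]; first exact: (@Inv0 A u).
    exact: (@step A u Hcl n IH (HA n)).
  by move=> n _; apply: Hall.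
- move=> [_ Honly]; apply: NNPP => H; apply: fin.
  have Hl : forall a r, complete_return_word u [:: a] r -> palindrome r.
    move=> a r c; case: (boolP (palindrome r)) => // np; exfalso; apply: H.
    by exists a, r.
  have HA : forall n, 0 < n -> Acyc u n.
    move=> n n0 q sq fq cp; have e := Honly q fq cp; subst q.
    by rewrite /= in sq; subst n.
  have Hall : forall n, Inv u n.+1.
    elim=> [|n IH]; first exact: (@Inv1 A u Hl).
    exact: (@step A u Hcl n.+1 IH (HA n.+1 isT)).
  by case=> // n _; apply: Hall.
Qed.
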